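(* Let $i,p\ge-1$ and $q\ge0$, and let $v\in C([0,1],L(\mathbb{R}^d,\mathbb{R}^n))$, $w\in C([0,1],\mathbb{R}^d)$. Then \[ \Big\|\Delta_i\Big(\int_0^\cdot\Delta_pv(s)\,d\Delta_qw(s)\Big)\Big\|_\infty\lesssim 2^{-(i\vee p\vee q)-i+p+q}\|\Delta_pv\|_\infty\|\Delta_qw\|_\infty, \] except in the case $i=q>p$, where one only has \[ \Big\|\Delta_i\Big(\int_0^\cdot\Delta_pv(s)\,d\Delta_qw(s)\Big)\Big\|_\infty\lesssim\|\Delta_pv\|_\infty\|\Delta_qw\|_\infty. \]
   Context: Index set: pairs $(p,m)$ with either $p=-1,m=0$, or $p\in\mathbb{N}=\{0,1,2,\dots\}$ and $0\le m\le 2^p$. For $p\in\mathbb{N}$, $1\le m\le 2^p$ set $t^0_{pm}=(m-1)2^{-p}$, $t^1_{pm}=(2m-1)2^{-p-1}$, $t^2_{pm}=m2^{-p}$. Rescaled Haar functions: for $p\in\mathbb{N}$, $1\le m\le 2^p$, $\chi_{pm}=2^p$ on $[t^0_{pm},t^1_{pm})$, $=-2^p$ on $[t^1_{pm},t^2_{pm})$, $=0$ elsewhere; $\chi_{00}\equiv1$; $\chi_{p0}\equiv0$ for $p\ge1$. Rescaled Schauder functions: $\varphi_{pm}(t)=\int_0^t\chi_{pm}(s)\,ds$ for $p\in\mathbb{N}$, and $\varphi_{-10}\equiv1$. For continuous $f:[0,1]\to E$ ($E$ a finite-dimensional normed space), coefficients: $f_{-10}=f(0)$, $f_{00}=f(1)-f(0)$,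 $f_{p0}=0$ for $p\ge1$, $f_{pm}=2f(t^1_{pm})-f(t^0_{pm})-f(t^2_{pm})$ for $p\in\mathbb{N},m\ge1$. Schauder blocks: $\Delta_pf=\sum_{m=0}^{2^p}f_{pm}\varphi_{pm}$ for $p\ge-1$. Since $\Delta_qw$ is piecewise linear, $\int_0^t\Delta_pv\,d\Delta_qw:=\int_0^t\Delta_pv(s)(\Delta_qw)'(s)\,ds$. $\|\cdot\|_\infty$ is the sup norm on $[0,1]$; $a\vee b=\max(a,b)$; $\lesssim$ hides a constant independent of $i,p,q,v,w$. *)

(* Defs.v *)
From Stdlib Require Import Reals Lra Lia ZArith List.
Import ListNotations.
Open Scope R_scope.

Definition fsum (n : nat) (g : nat -> R) : R :=
  fold_right Rplus 0 (map g (seq 0 n)).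

Definition vnorm (n : nat) (x : nat -> R) : R :=
  fold_right Rmax 0 (map (fun k => Rabs (x k)) (seq 0 n)).

(* operator norm of an n x d matrix (entries M k j, k<n, j<d) from
   (R^d, max norm) to (R^n, max norm): max row sum *)
Definition opnorm (n d : nat) (M : nat -> nat -> R) : R :=
  fold_right Rmax 0 (map (fun k => fsum d (fun j => Rabs (M k j))) (seq 0 n)).

(* dyadic points, p >= 0, 1 <= m <= 2^p *)
Definition t0 (p m : nat) : R := (INR m - 1) / 2 ^ p.
Definition t1 (p m : nat) : R := (2 * INR m - 1) / 2 ^ (S p).
Definition t2 (p m : nat) : R := INR m / 2 ^ p.

Definition chi (p m : nat) (s : R) : R :=
  if (m =? 0)%nat then (if (p =? 0)%nat then 1 else 0)
  else if Rle_dec (t0 p m) s then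
         (if Rlt_dec s (t1 p m) then 2 ^ p
          else if Rlt_dec s (t2 p m) then - 2 ^ p else 0)
       else 0.

(* rescaled Schauder functions phi_{pm}(t) = int_0^t chi_{pm}, p >= 0,
   written out explicitly (valid for t in [0,1]) *)
Definition phi (p m : nat) (t : R) : R :=
  if (m =? 0)%nat then (if (p =? 0)%nat then t else 0)
  else if Rle_dec (t0 p m) t then
         (if Rle_dec t (t1 p m) then 2 ^ p * (t - t0 p m)
          else if Rle_dec t (t2 p m) then 2 ^ p * (t2 p m - t) else 0)
       else 0.

Definition scoef (f : R -> R) (p m : nat) : R :=
  if (m =? 0)%nat then (if (p =? 0)%nat then f 1 - f 0 else 0)
  else 2 * f (t1 p m) - f (t0 p m) - f (t2 p m).

Definition DeltaN (f : R -> R) (p : nat) (t : R) : R :=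
  sum_f_R0 (fun m => scoef f p m * phi p m t) (2 ^ p)%nat.

Definition SDelta (f : R -> R) (p : Z) (t : R) : R :=
  if (p <? 0)%Z then f 0 else DeltaN f (Z.to_nat p) t.

(* derivative (a.e., right derivative) of the piecewise linear Delta_q f, q >= 0 *)
Definition dSDelta (f : R -> R) (q : nat) (s : R) : R :=
  sum_f_R0 (fun m => scoef f q m * chi q m s) (2 ^ q)%nat.

Definition cont01 (f : R -> R) : Prop :=
  forall t, 0 <= t <= 1 -> forall eps, eps > 0 ->
    exists delta, delta > 0 /\
      forall s, 0 <= s <= 1 -> Rabs (s - t) < delta -> Rabs (f s - f t) < eps.

(* Main.v *)
Require Import Defs.
From Stdlib Require Import Reals Lra Lia ZArith List Bool.
From Coquelicot Require Import Coquelicot.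
Open Scope R_scope.

Lemma int_affine (H : R->R) x y (pr: Riemann_integrable H x y) al be :
  x < y -> (forall s, x < s < y -> H s = be + al*(s-x)) ->
  RiemannInt pr = (y-x)*(be + al*(y-x)/2).
Proof.
  intros Hxy Hs. rewrite <- RInt_Reals.
  rewrite (RInt_ext H (fun s => be + al*(s-x))).
  2:{ intros s Hs'. rewrite Rmin_left in Hs' by lra. rewrite Rmax_right in Hs' by lra. apply Hs; lra. }
  apply is_RInt_unique.
  replace ((y-x)*(be + al*(y-x)/2)) with
   ((fun s => be*(s-x) + al*(s-x)^2/2) y - (fun s => be*(s-x) + al*(s-x)^2/2) x) by (simpl; field).
  apply (is_RInt_derive (fun s => be*(s-x) + al*(s-x)^2/2)).
  - intros s _. auto_derive; auto. simpl; field.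
  - intros s _. apply (ex_derive_continuous (fun s => be + al*(s-x))). auto_derive; auto.
Qed.
Require Import Defs.
From Stdlib Require Import Reals Lra Lia ZArith List.
Open Scope R_scope.

Lemma lsum_ext (l : list nat) g h : (forall j, In j l -> g j = h j) ->
  fold_right Rplus 0 (map g l) = fold_right Rplus 0 (map h l).
Proof. induction l; simpl; intros; auto. rewrite H by auto. rewrite IHl; auto. Qed.
Lemma lsum_le (l : list nat) g h : (forall j, In j l -> g j <= h j) ->
  fold_right Rplus 0 (map g l) <= fold_right Rplus 0 (map h l).
Proof. induction l; simpl; intros. lra. pose proof (H a (or_introl eq_refl)).
  assert (fold_right Rplus 0 (map g l) <= fold_right Rplus 0 (map h l)) by (apply IHl; auto). lra. Qed.
Lemma lsum_plus (l : list nat) g h :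
  fold_right Rplus 0 (map (fun j => g j + h j) l) = fold_right Rplus 0 (map g l) + fold_right Rplus 0 (map h l).
Proof. induction l; simpl; [lra|]. rewrite IHl; lra. Qed.
Lemma lsum_scal (l : list nat) c g :
  fold_right Rplus 0 (map (fun j => c * g j) l) = c * fold_right Rplus 0 (map g l).
Proof. induction l; simpl; [lra|]. rewrite IHl; lra. Qed.
Lemma lsum_abs (l : list nat) g :
  Rabs (fold_right Rplus 0 (map g l)) <= fold_right Rplus 0 (map (fun j => Rabs (g j)) l).
Proof. induction l; simpl. rewrite Rabs_R0; lra.
  eapply Rle_trans. apply Rabs_triang. lra. Qed.
Lemma lmax_ge (l : list nat) g x : In x l -> g x <= fold_right Rmax 0 (map g l).
Proof. induction l; simpl; intros H; [contradiction|]. destruct H as [<-|H].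
  apply Rmax_l. eapply Rle_trans; [apply IHl; auto|apply Rmax_r]. Qed.
Lemma lmax_le (l : list nat) g M : 0 <= M -> (forall x, In x l -> g x <= M) -> fold_right Rmax 0 (map g l) <= M.
Proof. induction l; simpl; intros; auto. apply Rmax_lub; auto. Qed.

Lemma fsum_ext d g h : (forall j, (j < d)%nat -> g j = h j) -> fsum d g = fsum d h.
Proof. intros; unfold fsum; apply lsum_ext; intros j Hj; apply in_seq in Hj; apply H; lia. Qed.
Lemma fsum_le d g h : (forall j, (j < d)%nat -> g j <= h j) -> fsum d g <= fsum d h.
Proof. intros; unfold fsum; apply lsum_le; intros j Hj; apply in_seq in Hj; apply H; lia. Qed.
Lemma fsum_plus d g h : fsum d (fun j => g j + h j) = fsum d g + fsum d h.
Proof. apply lsum_plus. Qed.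
Lemma fsum_scal d c g : fsum d (fun j => c * g j) = c * fsum d g.
Proof. apply lsum_scal. Qed.
Lemma fsum_abs d g : Rabs (fsum d g) <= fsum d (fun j => Rabs (g j)).
Proof. apply lsum_abs. Qed.
Lemma fsum_nonneg d g : (forall j, (j<d)%nat -> 0 <= g j) -> 0 <= fsum d g.
Proof. intros. replace 0 with (fsum d (fun _ => 0)). apply fsum_le; auto.
  unfold fsum. induction (seq 0 d); simpl; auto; lra. Qed.

Lemma opnorm_row n d M k : (k < n)%nat -> fsum d (fun j => Rabs (M k j)) <= opnorm n d M.
Proof. intros; unfold opnorm. apply (lmax_ge _ (fun k => fsum d (fun j => Rabs (M k j)))). apply in_seq; lia. Qed.
Lemma opnorm_nonneg n d M : 0 <= opnorm n d M.
Proof. unfold opnorm. induction (seq 0 n); simpl; [lra|]. eapply Rle_trans; [apply IHl|apply Rmax_r]. Qed.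
Lemma vnorm_comp d x j : (j < d)%nat -> Rabs (x j) <= vnorm d x.
Proof. intros; unfold vnorm. apply (lmax_ge _ (fun k => Rabs (x k))). apply in_seq; lia. Qed.
Lemma vnorm_nonneg d x : 0 <= vnorm d x.
Proof. unfold vnorm. induction (seq 0 d); simpl; [lra|]. eapply Rle_trans; [apply IHl|apply Rmax_r]. Qed.
Lemma vnorm_le n x X : 0 <= X -> (forall k, (k < n)%nat -> Rabs (x k) <= X) -> vnorm n x <= X.
Proof. intros; unfold vnorm. apply lmax_le; auto. intros k Hk; apply in_seq in Hk; apply H0; lia. Qed.

Definition nogrid (N a b : R) := forall k : nat, INR k / N <= a \/ b <= INR k / N.

Lemma pow2_pos n : 0 < 2 ^ n.
Proof. apply pow_lt; lra. Qed.

Lemma NG P L l : (P <= L)%nat -> nogrid (2^P) (INR l / 2^L) (INR (l+1) / 2^L).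
Proof.
  intros HPL k.
  assert (E : INR k / 2^P = INR (k * 2^(L-P)) / 2^L).
  { rewrite mult_INR, pow_INR. replace L with (P + (L-P))%nat at 2 by lia.
    rewrite pow_add. simpl INR. replace (1+1) with 2 by ring. pose proof (pow2_pos P); pose proof (pow2_pos (L-P)). field; lra. }
  rewrite E. pose proof (pow2_pos L).
  destruct (Nat.le_gt_cases (k * 2^(L-P)) l) as [H1|H1].
  - left. apply Rmult_le_compat_r. left; apply Rinv_0_lt_compat; auto. apply le_INR; auto.
  - right. apply Rmult_le_compat_r. left; apply Rinv_0_lt_compat; auto. apply le_INR; lia.
Qed.

Lemma nogrid_sub N a b a' b' : a <= a' -> b' <= b -> nogrid N a b -> nogrid N a' b'.
Proof. intros H1 H2 H k. destruct (H k); [left|right]; lra. Qed.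

Lemma t_grid pn m : (1 <= m)%nat ->
  t0 pn m = INR (2*m-2) / 2^(S pn) /\ t1 pn m = INR (2*m-1) / 2^(S pn) /\ t2 pn m = INR (2*m) / 2^(S pn).
Proof.
  intros Hm. pose proof (pow2_pos pn). unfold t0, t1, t2.
  rewrite !minus_INR by lia. rewrite mult_INR. simpl INR. replace (1+1) with 2 by ring. change (2^S pn) with (2 * 2^pn). repeat split; field; lra.
Qed.

Lemma t_facts pn m : 2^pn * t0 pn m = INR m - 1 /\ 2^pn * t1 pn m = INR m - /2 /\ 2^pn * t2 pn m = INR m.
Proof. pose proof (pow2_pos pn). unfold t0,t1,t2. simpl. repeat split; field; lra. Qed.

Lemma phi_aff pn m a b s : a < b -> nogrid (2^(S pn)) a b -> a <= s <= b ->
  phi pn m s = phi pn m a + chi pn m a * (s - a).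
Proof.
  intros Hab Hng Hs. unfold phi, chi.
  destruct (m =? 0)%nat eqn:Em.
  { destruct (pn =? 0)%nat; ring. }
  apply Nat.eqb_neq in Em.
  destruct (t_grid pn m) as (G0 & G1 & G2); [lia|].
  pose proof (Hng (2*m-2)%nat) as N0. pose proof (Hng (2*m-1)%nat) as N1. pose proof (Hng (2*m)%nat) as N2.
  rewrite <- G0 in N0. rewrite <- G1 in N1. rewrite <- G2 in N2.
  destruct (t_facts pn m) as (F0 & F1 & F2). pose proof (pow2_pos pn).
  destruct (Rle_dec (t0 pn m) s); destruct (Rle_dec s (t1 pn m)); destruct (Rle_dec s (t2 pn m));
  destruct (Rle_dec (t0 pn m) a); destruct (Rle_dec a (t1 pn m)); destruct (Rle_dec a (t2 pn m));
  destruct (Rlt_dec a (t1 pn m)); destruct (Rlt_dec a (t2 pn m)); try nra.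
Qed.

Lemma chi_const pn m a b s : nogrid (2^(S pn)) a b -> a <= s < b ->
  chi pn m s = chi pn m a.
Proof.
  intros Hng Hs. unfold chi.
  destruct (m =? 0)%nat eqn:Em; [reflexivity|].
  apply Nat.eqb_neq in Em.
  destruct (t_grid pn m) as (G0 & G1 & G2); [lia|].
  pose proof (Hng (2*m-2)%nat) as N0. pose proof (Hng (2*m-1)%nat) as N1. pose proof (Hng (2*m)%nat) as N2.
  rewrite <- G0 in N0. rewrite <- G1 in N1. rewrite <- G2 in N2.
  destruct (Rle_dec (t0 pn m) s); destruct (Rlt_dec s (t1 pn m)); destruct (Rlt_dec s (t2 pn m));
  destruct (Rle_dec (t0 pn m) a); destruct (Rlt_dec a (t1 pn m)); destruct (Rlt_dec a (t2 pn m)); try lra.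
Qed.

Lemma sum_aff (x y z : nat -> R) c N : (forall m, (m <= N)%nat -> x m = y m + z m * c) ->
  sum_f_R0 x N = sum_f_R0 y N + sum_f_R0 z N * c.
Proof. induction N; simpl; intros H. apply H; lia. rewrite IHN by (intros; apply H; lia). rewrite H by lia. ring. Qed.

Lemma DeltaN_aff f pn a b s : a < b -> nogrid (2^(S pn)) a b -> a <= s <= b ->
  DeltaN f pn s = DeltaN f pn a + dSDelta f pn a * (s-a).
Proof.
  intros. unfold DeltaN, dSDelta. apply sum_aff. intros m _.
  rewrite (phi_aff pn m a b s) by auto. ring.
Qed.

Lemma dS_const f pn a b s : nogrid (2^(S pn)) a b -> a <= s < b -> dSDelta f pn s = dSDelta f pn a.
Proof. intros. unfold dSDelta. apply sum_eq. intros m _. rewrite (chi_const pn m a b s); auto. Qed.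

Definition slope (f : R -> R) (p : Z) (a : R) : R :=
  if (p <? 0)%Z then 0 else dSDelta f (Z.to_nat p) a.

Lemma SD_aff f p a b s : (-1 <= p)%Z -> a < b -> nogrid (2^(Z.to_nat (p+1))) a b -> a <= s <= b ->
  SDelta f p s = SDelta f p a + slope f p a * (s-a).
Proof.
  intros Hp Hab Hng Hs. unfold SDelta, slope. destruct (p <? 0)%Z eqn:E. ring.
  apply Z.ltb_ge in E. apply (DeltaN_aff f _ a b); auto.
  replace (S (Z.to_nat p)) with (Z.to_nat (p+1)) by lia. auto.
Qed.

Lemma phi_vanish qn m l : (1 <= qn)%nat -> phi qn m (INR l / 2^qn) = 0.
Proof.
  intros Hq. unfold phi.
  destruct (m =? 0)%nat eqn:Em. { destruct (qn =? 0)%nat eqn:E; auto. apply Nat.eqb_eq in E; lia. }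
  apply Nat.eqb_neq in Em.
  destruct (t_facts qn m) as (F0 & F1 & F2). pose proof (pow2_pos qn).
  assert (S0 : 2^qn * (INR l / 2^qn) = INR l) by (field; lra).
  set (s := INR l / 2^qn) in *.
  assert (D : (l <= m-1)%nat \/ (m <= l)%nat) by lia.
  assert (D' : INR l <= INR m - 1 \/ INR m <= INR l).
  { destruct D; [left|right]. replace (INR m - 1) with (INR (m-1)). apply le_INR; auto.
    rewrite minus_INR by lia; simpl; ring. apply le_INR; auto. }
  destruct (Rle_dec (t0 qn m) s); destruct (Rle_dec s (t1 qn m)); destruct (Rle_dec s (t2 qn m)); try nra.
Qed.

Lemma DeltaN_vanish f qn l : (1 <= qn)%nat -> DeltaN f qn (INR l / 2^qn) = 0.
Proof.
  intros. unfold DeltaN. rewrite (sum_eq _ (fun _ => 0)). 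
  - clear. induction (2^qn)%nat; simpl; lra.
  - intros m _. rewrite phi_vanish; auto; ring.
Qed.

Lemma cell P L l : (P <= L)%nat -> (l < 2^L)%nat -> exists K, (K < 2^P)%nat /\
  INR K / 2^P <= INR l / 2^L /\ INR (l+1) / 2^L <= INR (K+1) / 2^P.
Proof.
  intros HPL Hl. exists (l / 2^(L-P))%nat.
  assert (HE : (2^L = 2^P * 2^(L-P))%nat) by (rewrite <- Nat.pow_add_r; f_equal; lia).
  assert (Hpos : (0 < 2^(L-P))%nat) by (apply Nat.neq_0_lt_0, Nat.pow_nonzero; lia).
  pose proof (Nat.div_mod l (2^(L-P)) ltac:(lia)) as DM.
  pose proof (Nat.mod_upper_bound l (2^(L-P)) ltac:(lia)) as MB.
  set (K := (l / 2^(L-P))%nat) in *. set (r := (l mod 2^(L-P))%nat) in *.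
  assert (EK : forall k, INR k / 2^P = INR (k * 2^(L-P)) / 2^L).
  { intros k. rewrite mult_INR, pow_INR. replace L with (P + (L-P))%nat at 2 by lia.
    rewrite pow_add. simpl INR. replace (1+1) with 2 by ring.
    pose proof (pow2_pos P); pose proof (pow2_pos (L-P)). field; lra. }
  pose proof (pow2_pos L) as PL.
  split; [|split].
  - apply Nat.Div0.div_lt_upper_bound. rewrite Nat.mul_comm, <- HE. auto.
  - rewrite EK. apply Rmult_le_compat_r. left; apply Rinv_0_lt_compat; auto. apply le_INR; nia.
  - rewrite EK. apply Rmult_le_compat_r. left; apply Rinv_0_lt_compat; auto. apply le_INR; nia.
Qed.

Lemma slope_grid pn L l : (S pn <= L)%nat -> (l < 2^L)%nat -> exists a' b', 0 <= a' <= 1 /\ 0 <= b' <= 1 /\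
  forall f, Rabs (dSDelta f pn (INR l / 2^L)) <= 2^(S pn) * (Rabs (DeltaN f pn a') + Rabs (DeltaN f pn b')).
Proof.
  intros HL Hl. destruct (cell (S pn) L l HL Hl) as (K & HK & H1 & H2).
  exists (INR K / 2^(S pn)), (INR (K+1) / 2^(S pn)).
  pose proof (pow2_pos (S pn)) as PP. pose proof (pow2_pos L) as PL.
  assert (HK1 : INR (K+1) <= 2^(S pn)) by (rewrite <- (pow_INR 2); replace (INR 2) with 2 by (simpl; ring); apply le_INR; lia).
  assert (HK0 : 0 <= INR K) by apply pos_INR.
  assert (Eb : INR (K+1) = INR K + 1) by (rewrite plus_INR; simpl; ring).
  assert (El : INR (l+1) = INR l + 1) by (rewrite plus_INR; simpl; ring).
  split; [split|split;[split|]].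
  - apply Rmult_le_pos; auto. left; apply Rinv_0_lt_compat; auto.
  - apply (Rmult_le_reg_r (2^(S pn))); auto. unfold Rdiv; rewrite Rmult_assoc, Rinv_l by lra. lra.
  - apply Rmult_le_pos; [apply pos_INR|]. left; apply Rinv_0_lt_compat; auto.
  - apply (Rmult_le_reg_r (2^(S pn))); auto. unfold Rdiv; rewrite Rmult_assoc, Rinv_l by lra. lra.
  - intros f. set (a := INR K / 2^(S pn)) in *. set (b := INR (K+1) / 2^(S pn)) in *.
    assert (Hng : nogrid (2^(S pn)) a b) by apply NG, le_n.
    assert (Hab : b - a = / 2^(S pn)) by (unfold a, b; rewrite Eb; field; lra).
    assert (Hx : a <= INR l / 2^L < b).
    { split; auto. eapply Rlt_le_trans; [|apply H2]. rewrite El. unfold Rdiv.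
      apply Rmult_lt_compat_r. apply Rinv_0_lt_compat; auto. lra. }
    rewrite (dS_const f pn a b) by auto.
    pose proof (DeltaN_aff f pn a b b ltac:(lra) Hng ltac:(lra)) as E.
    assert (E2 : dSDelta f pn a = (DeltaN f pn b - DeltaN f pn a) * 2^(S pn)).
    { rewrite E, Hab. field. lra. }
    rewrite E2, Rabs_mult, (Rabs_right (2^(S pn))) by lra. rewrite Rmult_comm.
    apply Rmult_le_compat_l; [lra|]. unfold Rminus. eapply Rle_trans; [apply Rabs_triang|].
    rewrite Rabs_Ropp. lra.
Qed.

Section Piece.
Variables (d : nat) (p : Z) (qn : nat) (f g : nat -> R -> R) (F : R -> R).
Definition Hs (s : R) := fsum d (fun j => SDelta (f j) p s * dSDelta (g j) qn s).
Hypothesis HF : forall t, 0 <= t <= 1 -> exists pr : Riemann_integrable Hs 0 t, F t = RiemannInt pr.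

Lemma Idiff x y : 0 <= x <= y -> y <= 1 -> exists pr : Riemann_integrable Hs x y, F y - F x = RiemannInt pr.
Proof.
  intros Hx Hy. destruct (HF x) as [pr0 E0]; [lra|]. destruct (HF y) as [pr1 E1]; [lra|].
  exists (RiemannInt_P23 pr1 Hx). rewrite E0, E1.
  rewrite <- (RiemannInt_P26 (RiemannInt_P22 pr1 Hx) (RiemannInt_P23 pr1 Hx) pr1).
  rewrite (RiemannInt_P5 (RiemannInt_P22 pr1 Hx) pr0). ring.
Qed.

Lemma F0 : F 0 = 0.
Proof. destruct (HF 0) as [pr E]; [lra|]. rewrite E. apply RiemannInt_P9. Qed.

Lemma piece L l : (Z.to_nat (p+1) <= L)%nat -> (S qn <= L)%nat -> (l < 2^L)%nat -> (-1 <= p)%Z ->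
  F (INR l / 2^L + / 2^L) - F (INR l / 2^L) =
  / 2^L * fsum d (fun j => SDelta (f j) p (INR l / 2^L + / 2^L / 2) * dSDelta (g j) qn (INR l / 2^L)).
Proof.
  intros HpL HqL Hl Hp. pose proof (pow2_pos L) as PL.
  set (x := INR l / 2^L). set (h := / 2^L).
  assert (Hl' : INR l + 1 <= 2^L).
  { rewrite <- (pow_INR 2). replace (INR 2) with 2 by (simpl; ring). replace (INR l + 1) with (INR (S l)) by (rewrite S_INR; ring). apply le_INR; lia. }
  assert (Hx0 : 0 <= x) by (unfold x; apply Rmult_le_pos; [apply pos_INR|left; apply Rinv_0_lt_compat; auto]).
  assert (Hh : 0 < h) by (apply Rinv_0_lt_compat; auto).
  assert (Hx1 : x + h <= 1).
  { unfold x, h. apply (Rmult_le_reg_r (2^L)); auto. field_simplify; lra. }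
  assert (Exh : x + h = INR (l+1) / 2^L) by (unfold x, h; rewrite plus_INR; simpl; field; lra).
  destruct (Idiff x (x+h)) as [pr E]; [lra|lra|]. rewrite E.
  assert (Ng1 : nogrid (2^(Z.to_nat (p+1))) x (x+h)) by (rewrite Exh; apply NG; auto).
  assert (Ng2 : nogrid (2^(S qn)) x (x+h)) by (rewrite Exh; apply NG; auto).
  rewrite (int_affine Hs x (x+h) pr (fsum d (fun j => slope (f j) p x * dSDelta (g j) qn x))
                                     (fsum d (fun j => SDelta (f j) p x * dSDelta (g j) qn x))); [|lra|].
  - replace (x + h - x) with h by ring.
    f_equal. transitivity (fsum d (fun j => SDelta (f j) p x * dSDelta (g j) qn x + (h/2) * (slope (f j) p x * dSDelta (g j) qn x))).
    + rewrite fsum_plus, fsum_scal; field.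
    + apply fsum_ext. intros j _.
      rewrite (SD_aff (f j) p x (x+h) (x+h/2)); auto; try lra; try ring.
  - intros s Hs'. unfold Hs. transitivity (fsum d (fun j => SDelta (f j) p x * dSDelta (g j) qn x + (s-x) * (slope (f j) p x * dSDelta (g j) qn x))).
    2:{ rewrite fsum_plus, fsum_scal; ring. } apply fsum_ext. intros j _.
    rewrite (SD_aff (f j) p x (x+h) s); auto; try lra. rewrite (dS_const (g j) qn x (x+h) s); auto; try lra; try ring.
Qed.
End Piece.

Lemma phi_facts pn m t : (1 <= m)%nat -> 0 <= phi pn m t <= /2 /\
  (t <= t0 pn m -> phi pn m t = 0) /\ (t2 pn m <= t -> phi pn m t = 0).
Proof.
  intros Hm. unfold phi. destruct (m =? 0)%nat eqn:Em. { apply Nat.eqb_eq in Em; lia. }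
  destruct (t_facts pn m) as (F0 & F1 & F2). pose proof (pow2_pos pn).
  destruct (Rle_dec (t0 pn m) t); destruct (Rle_dec t (t1 pn m)); destruct (Rle_dec t (t2 pn m));
  repeat split; intros; try nra.
Qed.

Lemma phi_psum pn N t : sum_f_R0 (fun m => phi pn (S m) t) N <= /2 /\
  (INR (S N) / 2^pn <= t -> sum_f_R0 (fun m => phi pn (S m) t) N = 0).
Proof.
  pose proof (pow2_pos pn) as PP.
  induction N; simpl sum_f_R0.
  - destruct (phi_facts pn 1 t) as (A1 & A2 & A3); [lia|]. split; [lra|]. intros; apply A3.
    unfold t2; auto.
  - destruct IHN as [I1 I2]. destruct (phi_facts pn (S (S N)) t) as (A1 & A2 & A3); [lia|].
    assert (E0 : t0 pn (S (S N)) = INR (S N) / 2^pn) by (unfold t0; rewrite (S_INR (S N)); field; lra).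
    assert (E2 : t2 pn (S (S N)) = INR (S (S N)) / 2^pn) by (unfold t2; auto).
    assert (Hlt : INR (S N) / 2^pn < INR (S (S N)) / 2^pn).
    { unfold Rdiv; apply Rmult_lt_compat_r. apply Rinv_0_lt_compat; auto. rewrite (S_INR (S N)); lra. }
    destruct (Rle_dec (INR (S N) / 2^pn) t).
    + rewrite I2 by auto. split; [lra|]. intros; rewrite A3; [ring|lra].
    + rewrite A2 by lra. split; [lra|]. intros; lra.
Qed.

Lemma DeltaN_bound (G : R -> R) ni t M0 M : 0 <= t <= 1 -> 0 <= M0 -> 0 <= M ->
  (ni = 0%nat -> Rabs (G 1 - G 0) <= M0) ->
  (forall m, (1 <= m <= 2^ni)%nat -> Rabs (scoef G ni m) <= M) ->
  Rabs (DeltaN G ni t) <= M0 + M / 2.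
Proof.
  intros Ht HM0 HM H0 Hm. unfold DeltaN.
  assert (Npos : (0 < 2^ni)%nat) by (apply Nat.neq_0_lt_0, Nat.pow_nonzero; lia).
  rewrite decomp_sum by auto.
  eapply Rle_trans; [apply Rabs_triang|]. apply Rplus_le_compat.
  - unfold scoef, phi. simpl Nat.eqb. destruct (ni =? 0)%nat eqn:E.
    + apply Nat.eqb_eq in E. rewrite Rabs_mult. specialize (H0 E).
      rewrite (Rabs_right t) by lra. nra.
    + rewrite Rmult_0_l, Rabs_R0; lra.
  - eapply Rle_trans; [apply sum_f_R0_triangle|].
    apply Rle_trans with (sum_f_R0 (fun m => phi ni (S m) t * M) (Nat.pred (2^ni))).
    + apply sum_Rle. intros m Hm'. rewrite Rabs_mult.
      destruct (phi_facts ni (S m) t) as (A1 & _ & _); [lia|]. rewrite (Rabs_right (phi _ _ _)) by lra.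
      rewrite (Rmult_comm (phi _ _ _)). apply Rmult_le_compat_r; [lra|]. apply Hm. lia.
    + rewrite <- scal_sum. destruct (phi_psum ni (Nat.pred (2^ni)) t) as [P1 _].
      unfold Rdiv. apply Rmult_le_compat_l; auto.
Qed.

Lemma regrid e L l : INR l / 2^L = INR (l * 2^e) / 2^(L+e).
Proof. rewrite mult_INR, pow_INR, pow_add. simpl INR. replace (1+1) with 2 by ring.
  pose proof (pow2_pos L); pose proof (pow2_pos e). field; lra. Qed.

Lemma INR_pow2 n : INR (2^n) = 2^n.
Proof. rewrite pow_INR. simpl INR. f_equal; ring. Qed.

Lemma fsum_cross d (a c : nat -> R) K : (forall j, (j<d)%nat -> Rabs (c j) <= K) ->
  Rabs (fsum d (fun j => a j * c j)) <= fsum d (fun j => Rabs (a j)) * K.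
Proof.
  intros H. eapply Rle_trans; [apply fsum_abs|]. rewrite Rmult_comm, <- fsum_scal. apply fsum_le.
  intros j Hj. rewrite Rabs_mult, Rmult_comm. apply Rmult_le_compat_r; [apply Rabs_pos|auto].
Qed.

Section Est.
Variables (d : nat) (p : Z) (qn : nat) (f g : nat -> R -> R) (F : R -> R) (A B : R).
Hypothesis Hp : (-1 <= p)%Z.
Hypothesis HF : forall t, 0<=t<=1 -> exists pr : Riemann_integrable (Hs d p qn f g) 0 t, F t = RiemannInt pr.
Hypothesis HA : forall s, 0<=s<=1 -> fsum d (fun j => Rabs (SDelta (f j) p s)) <= A.
Hypothesis HB : forall s, 0<=s<=1 -> forall j, (j<d)%nat -> Rabs (DeltaN (g j) qn s) <= B.
Hypothesis HA0 : 0 <= A.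
Hypothesis HB0 : 0 <= B.

Lemma grid01 L l : (l <= 2^L)%nat -> 0 <= INR l / 2^L <= 1.
Proof.
  intros H. pose proof (pow2_pos L). split.
  - apply Rmult_le_pos; [apply pos_INR|left; apply Rinv_0_lt_compat; auto].
  - apply (Rmult_le_reg_r (2^L)); auto. unfold Rdiv; rewrite Rmult_assoc, Rinv_l by lra.
    rewrite <- INR_pow2. rewrite Rmult_1_r, Rmult_1_l. apply le_INR; auto.
Qed.

Lemma cbound L l j : (S qn <= L)%nat -> (l < 2^L)%nat -> (j < d)%nat ->
  Rabs (dSDelta (g j) qn (INR l / 2^L)) <= 2^(S qn) * (2*B).
Proof.
  intros HL Hl Hj. destruct (slope_grid qn L l HL Hl) as (a & b & Ha & Hb & H).
  eapply Rle_trans; [apply H|]. pose proof (pow2_pos (S qn)).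
  apply Rmult_le_compat_l; [lra|]. pose proof (HB a Ha j Hj); pose proof (HB b Hb j Hj). lra.
Qed.

Lemma sbound L l : (Z.to_nat (p+1) <= L)%nat -> (l < 2^L)%nat ->
  fsum d (fun j => Rabs (slope (f j) p (INR l / 2^L))) <= 2^(Z.to_nat (p+1)) * (2*A).
Proof.
  intros HL Hl. pose proof (pow2_pos (Z.to_nat (p+1))). unfold slope.
  destruct (p <? 0)%Z eqn:E.
  - rewrite (fsum_ext d _ (fun _ => 0 * 0)). rewrite fsum_scal. nra. intros; rewrite Rabs_R0; ring.
  - apply Z.ltb_ge in E. replace (Z.to_nat (p+1)) with (S (Z.to_nat p)) in * by lia.
    destruct (slope_grid (Z.to_nat p) L l HL Hl) as (a & b & Ha & Hb & Hsg).
    eapply Rle_trans. apply fsum_le. intros j _. apply Hsg.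
    rewrite fsum_scal. apply Rmult_le_compat_l; [lra|]. rewrite fsum_plus.
    pose proof (HA a Ha); pose proof (HA b Hb). unfold SDelta in *.
    destruct (p <? 0)%Z eqn:E'; [lia|]. lra.
Qed.

Lemma piece' L l x h : (Z.to_nat (p+1) <= L)%nat -> (S qn <= L)%nat -> (l < 2^L)%nat ->
  x = INR l / 2^L -> h = / 2^L ->
  F (x+h) - F x = h * fsum d (fun j => SDelta (f j) p (x + h/2) * dSDelta (g j) qn x).
Proof. intros; subst. apply piece; auto. Qed.

Lemma piece_triv L l : (Z.to_nat (p+1) <= L)%nat -> (S qn <= L)%nat -> (l < 2^L)%nat ->
  Rabs (F (INR (l+1) / 2^L) - F (INR l / 2^L)) <= / 2^L * (A * (2^(S qn) * (2*B))).
Proof.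
  intros H1 H2 H3. pose proof (pow2_pos L).
  assert (E : INR (l+1) / 2^L = INR l / 2^L + / 2^L) by (rewrite plus_INR; simpl; field; lra).
  rewrite E, (piece' L l (INR l / 2^L) (/2^L)) by auto.
  rewrite Rabs_mult, Rabs_right by (left; apply Rinv_0_lt_compat; auto).
  apply Rmult_le_compat_l; [left; apply Rinv_0_lt_compat; auto|].
  eapply Rle_trans. apply fsum_cross. intros j Hj. apply cbound; eauto.
  apply Rmult_le_compat_r. pose proof (pow2_pos (S qn)); nra.
  apply HA. destruct (grid01 L (l+1)) as [_ X]; [lia|]. rewrite E in X.
  destruct (grid01 L l) as [Y _]; [lia|]. pose proof (Rinv_0_lt_compat _ H). lra.
Qed.

Lemma cell_cancel l : (1 <= qn)%nat -> (Z.to_nat (p+1) <= qn)%nat -> (l < 2^qn)%nat ->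
  Rabs (F (INR (l+1) / 2^qn) - F (INR l / 2^qn)) <=
  (/ 2^(S qn))^2 * ((2^(Z.to_nat (p+1)) * (2*A)) * (2^(S qn) * (2*B))).
Proof.
  intros Hq HPq Hl. pose proof (pow2_pos qn) as PQ. pose proof (pow2_pos (S qn)) as PS.
  set (a := INR l / 2^qn). set (h := / 2^(S qn)).
  assert (Hh : 0 < h) by (apply Rinv_0_lt_compat; auto).
  assert (Ea : a = INR (2*l) / 2^(S qn)) by (unfold a; rewrite (regrid 1 qn l); replace (l*2^1)%nat with (2*l)%nat by (simpl; lia); replace (qn+1)%nat with (S qn) by lia; reflexivity).
  assert (Ea1 : a + h = INR (2*l+1) / 2^(S qn)) by (rewrite Ea; unfold h; rewrite plus_INR; simpl; field; lra).
  assert (Ea2 : INR (l+1) / 2^qn = a + h + h) by (unfold a, h; rewrite plus_INR; simpl; field; lra).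
  rewrite Ea2.
  pose proof (piece' (S qn) (2*l) a h ltac:(lia) ltac:(lia) ltac:(simpl; lia) Ea eq_refl) as P1.
  pose proof (piece' (S qn) (2*l+1) (a+h) h ltac:(lia) ltac:(lia) ltac:(simpl; lia) Ea1 eq_refl) as P2.
  assert (Ng : nogrid (2^(Z.to_nat (p+1))) a (a+h+h)).
  { rewrite <- Ea2. apply NG; auto. }
  assert (Ngq1 : nogrid (2^(S qn)) a (a+h)) by (rewrite Ea1, Ea; apply (NG (S qn) (S qn) (2*l)); lia).
  assert (Ngq2 : nogrid (2^(S qn)) (a+h) (a+h+h)).
  { replace (a+h+h) with (INR (2*l+1+1) / 2^(S qn)). rewrite Ea1. apply NG; lia.
    rewrite Ea1; unfold h; rewrite plus_INR; simpl; field; lra. }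
  assert (Cneg : forall j, dSDelta (g j) qn (a+h) = - dSDelta (g j) qn a).
  { intros j. pose proof (DeltaN_aff (g j) qn a (a+h) (a+h) ltac:(lra) Ngq1 ltac:(lra)) as D1.
    pose proof (DeltaN_aff (g j) qn (a+h) (a+h+h) (a+h+h) ltac:(lra) Ngq2 ltac:(lra)) as D2.
    assert (V1 : DeltaN (g j) qn a = 0) by (apply DeltaN_vanish; auto).
    assert (V2 : DeltaN (g j) qn (a+h+h) = 0) by (rewrite <- Ea2; apply DeltaN_vanish; auto).
    apply (Rmult_eq_reg_r h); [|lra]. nra. }
  assert (Eq : F (a+h+h) - F a = - h^2 * fsum d (fun j => slope (f j) p a * dSDelta (g j) qn a)).
  { replace (F (a+h+h) - F a) with ((F (a+h+h) - F (a+h)) + (F (a+h) - F a)) by ring.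
    rewrite P1, P2. rewrite <- Rmult_plus_distr_l, <- fsum_plus.
    replace (- h^2 * fsum d (fun j => slope (f j) p a * dSDelta (g j) qn a)) with
      (h * fsum d (fun j => (-h) * (slope (f j) p a * dSDelta (g j) qn a))) by (rewrite fsum_scal; ring).
    f_equal. apply fsum_ext. intros j _. rewrite Cneg.
    rewrite (SD_aff (f j) p a (a+h+h) (a+h+h/2)) by (auto; lra).
    rewrite (SD_aff (f j) p a (a+h+h) (a+h/2)) by (auto; lra). ring. }
  rewrite Eq, Rabs_mult, Rabs_Ropp, Rabs_right by (apply Rle_ge, pow_le; lra).
  apply Rmult_le_compat_l; [apply pow_le; lra|].
  eapply Rle_trans. apply fsum_cross. intros j Hj. rewrite Ea. apply cbound; [lia|simpl; lia|auto].
  apply Rmult_le_compat_r. nra. unfold a. apply sbound; auto.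
Qed.

Lemma half_cancel i m : (S qn <= i)%nat -> (Z.to_nat (p+1) <= i)%nat -> (1 <= m <= 2^i)%nat ->
  Rabs (scoef F i m) <= (/ 2^(S i))^2 * ((2^(Z.to_nat (p+1)) * (2*A)) * (2^(S qn) * (2*B))).
Proof.
  intros Hq HP Hm. pose proof (pow2_pos i) as PQ. pose proof (pow2_pos (S i)) as PS.
  unfold scoef. destruct (m =? 0)%nat eqn:Em; [apply Nat.eqb_eq in Em; lia|].
  destruct (t_grid i m) as (G0 & G1 & G2); [lia|].
  set (a := t0 i m) in *. set (h := / 2^(S i)).
  assert (Hh : 0 < h) by (apply Rinv_0_lt_compat; auto).
  assert (Ea1 : t1 i m = a + h) by (rewrite G1, G0; unfold h; rewrite !minus_INR by lia; simpl; field; lra).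
  assert (Ea2 : t2 i m = a + h + h) by (rewrite G2, G0; unfold h; rewrite !minus_INR by lia; simpl; field; lra).
  assert (Ea : a = INR (m-1) / 2^i) by (unfold a, t0; rewrite minus_INR by lia; simpl; ring).
  rewrite Ea1, Ea2.
  pose proof (piece' (S i) (2*m-2) a h ltac:(lia) ltac:(lia) ltac:(simpl; lia) G0 eq_refl) as P1.
  assert (G1' : a + h = INR (2*m-1) / 2^(S i)) by (rewrite <- Ea1; auto).
  pose proof (piece' (S i) (2*m-1) (a+h) h ltac:(lia) ltac:(lia) ltac:(simpl; lia) G1' eq_refl) as P2.
  assert (Ea2' : a + h + h = INR (m-1+1) / 2^i).
  { rewrite <- Ea2, plus_INR, minus_INR by lia. unfold t2. simpl; field; lra. }
  assert (Ng : nogrid (2^(Z.to_nat (p+1))) a (a+h+h)) by (rewrite Ea2', Ea; apply NG; auto).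
  assert (Ngq : nogrid (2^(S qn)) a (a+h+h)) by (rewrite Ea2', Ea; apply NG; auto).
  assert (Ceq : forall j, dSDelta (g j) qn (a+h) = dSDelta (g j) qn a).
  { intros j. apply (dS_const (g j) qn a (a+h+h)); auto; lra. }
  assert (Eq : 2 * F (a+h) - F a - F (a+h+h) = - h^2 * fsum d (fun j => slope (f j) p a * dSDelta (g j) qn a)).
  { replace (2 * F (a+h) - F a - F (a+h+h)) with ((F (a+h) - F a) - (F (a+h+h) - F (a+h))) by ring.
    rewrite P1, P2. rewrite <- Rmult_minus_distr_l.
    replace (fsum d (fun j => SDelta (f j) p (a + h / 2) * dSDelta (g j) qn a) -
      fsum d (fun j => SDelta (f j) p (a + h + h / 2) * dSDelta (g j) qn (a + h))) with
      (fsum d (fun j => SDelta (f j) p (a + h / 2) * dSDelta (g j) qn a) +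
      (-1) * fsum d (fun j => SDelta (f j) p (a + h + h / 2) * dSDelta (g j) qn (a + h))) by ring.
    rewrite <- fsum_scal, <- fsum_plus.
    replace (- h^2 * fsum d (fun j => slope (f j) p a * dSDelta (g j) qn a)) with
      (h * fsum d (fun j => (-h) * (slope (f j) p a * dSDelta (g j) qn a))) by (rewrite fsum_scal; ring).
    f_equal. apply fsum_ext. intros j _. rewrite Ceq.
    rewrite (SD_aff (f j) p a (a+h+h) (a+h+h/2)) by (auto; lra).
    rewrite (SD_aff (f j) p a (a+h+h) (a+h/2)) by (auto; lra). ring. }
  rewrite Eq, Rabs_mult, Rabs_Ropp, Rabs_right by (apply Rle_ge, pow_le; lra).
  apply Rmult_le_compat_l; [apply pow_le; lra|].
  eapply Rle_trans. apply fsum_cross. intros j Hj. rewrite G0. apply cbound; [lia|simpl; lia|auto].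
  apply Rmult_le_compat_r. pose proof (pow2_pos (S qn)); nra. rewrite G0. apply sbound; [lia|simpl; lia].
Qed.

Lemma sum_cells L E : (forall l, (l < 2^L)%nat -> Rabs (F (INR (l+1) / 2^L) - F (INR l / 2^L)) <= E) ->
  forall N l0, (l0 + N <= 2^L)%nat -> Rabs (F (INR (l0+N) / 2^L) - F (INR l0 / 2^L)) <= INR N * E.
Proof.
  intros H N. induction N; intros l0 Hl.
  - rewrite Nat.add_0_r. replace (F (INR l0 / 2 ^ L) - F (INR l0 / 2 ^ L)) with 0 by ring.
    rewrite Rabs_R0; simpl; lra.
  - replace (F (INR (l0 + S N) / 2 ^ L) - F (INR l0 / 2 ^ L)) with
      ((F (INR (l0 + N + 1) / 2 ^ L) - F (INR (l0+N) / 2 ^ L)) + (F (INR (l0 + N) / 2 ^ L) - F (INR l0 / 2 ^ L)))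
      by (replace (l0 + N + 1)%nat with (l0 + S N)%nat by lia; ring).
    eapply Rle_trans; [apply Rabs_triang|]. rewrite S_INR.
    pose proof (H (l0+N)%nat ltac:(lia)). pose proof (IHN l0 ltac:(lia)). lra.
Qed.

Lemma G_bound L E i m : (S i <= L)%nat -> (1 <= m <= 2^i)%nat ->
  (forall l, (l < 2^L)%nat -> Rabs (F (INR (l+1) / 2^L) - F (INR l / 2^L)) <= E) ->
  Rabs (scoef F i m) <= 2 * INR (2^(L - S i)) * E.
Proof.
  intros HL Hm H. unfold scoef. destruct (m =? 0)%nat eqn:Em; [apply Nat.eqb_eq in Em; lia|].
  destruct (t_grid i m) as (G0 & G1 & G2); [lia|].
  set (e := (L - S i)%nat).
  assert (HLe : L = (S i + e)%nat) by lia.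
  rewrite G0, G1, G2, !(regrid e (S i)), <- HLe.
  replace ((2*m-1) * 2^e)%nat with ((2*m-2) * 2^e + 2^e)%nat by (destruct m; [lia|]; nia).
  replace ((2*m) * 2^e)%nat with ((2*m-2) * 2^e + 2^e + 2^e)%nat by (destruct m; [lia|]; nia).
  assert (HB2 : ((2*m-2)*2^e + 2^e + 2^e <= 2^L)%nat).
  { rewrite HLe, Nat.pow_add_r. simpl (2^S i)%nat. nia. }
  pose proof (sum_cells L E H (2^e) ((2*m-2)*2^e) ltac:(lia)).
  pose proof (sum_cells L E H (2^e) ((2*m-2)*2^e + 2^e) ltac:(lia)).
  match goal with |- Rabs (2 * F ?y - F ?x - F ?z) <= _ =>
    replace (2 * F y - F x - F z) with ((F y - F x) - (F z - F y)) by ring end.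
  eapply Rle_trans; [apply Rabs_triang|]. rewrite Rabs_Ropp. lra.
Qed.

Lemma G0_bound L E : (forall l, (l < 2^L)%nat -> Rabs (F (INR (l+1) / 2^L) - F (INR l / 2^L)) <= E) ->
  Rabs (F 1 - F 0) <= INR (2^L) * E.
Proof.
  intros H. pose proof (sum_cells L E H (2^L) 0 ltac:(lia)). pose proof (pow2_pos L).
  replace (INR (0 + 2^L) / 2^L) with 1 in H0 by (rewrite Nat.add_0_l, INR_pow2; field; lra).
  replace (INR 0 / 2^L) with 0 in H0 by (simpl; field; lra). auto.
Qed.
End Est.

Lemma pwZ a b : powerRZ 2 (Z.of_nat a - Z.of_nat b) = 2^a / 2^b.
Proof.
  unfold Z.sub. rewrite powerRZ_add by lra. rewrite powerRZ_neg', <- !pow_powerRZ. reflexivity.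
Qed.

Lemma pow_subR a b : (b <= a)%nat -> 2^(a-b) = 2^a / 2^b.
Proof. intros. replace a with ((a-b)+b)%nat at 2 by lia. rewrite pow_add. pose proof (pow2_pos b). field; lra. Qed.

Theorem mainTheorem5 :
  forall (d n : nat),
  exists C : R,
  forall (i p q : Z) (v : R -> nat -> nat -> R) (w : R -> nat -> R)
         (F : R -> nat -> R) (A B : R),
    (-1 <= i)%Z -> (-1 <= p)%Z -> (0 <= q)%Z ->
    (forall k j, (k < n)%nat -> (j < d)%nat -> cont01 (fun s => v s k j)) ->
    (forall j, (j < d)%nat -> cont01 (fun s => w s j)) ->
    (forall t k, 0 <= t <= 1 -> (k < n)%nat ->
       exists pr : Riemann_integrable
         (fun s => fsum d (fun j =>
            SDelta (fun r => v r k j) p s * dSDelta (fun r => w r j) (Z.to_nat q) s))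
         0 t,
       F t k = RiemannInt pr) ->
    (forall s, 0 <= s <= 1 ->
       opnorm n d (fun k j => SDelta (fun r => v r k j) p s) <= A) ->
    (forall s, 0 <= s <= 1 ->
       vnorm d (fun j => SDelta (fun r => w r j) q s) <= B) ->
    forall t, 0 <= t <= 1 ->
      vnorm n (fun k => SDelta (fun r => F r k) i t) <=
        C * (if ((i =? q)%Z && (p <? q)%Z)%bool then 1
             else powerRZ 2 (- Z.max i (Z.max p q) - i + p + q)) * A * B.
Proof.
  intros d n. exists 8.
  intros i p q v w F A B Hi Hp Hq _ _ HF HA HB t Ht.
  assert (A0 : 0 <= A) by (eapply Rle_trans; [apply opnorm_nonneg|apply (HA 0); lra]).
  assert (B0 : 0 <= B) by (eapply Rle_trans; [apply vnorm_nonneg|apply (HB 0); lra]).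
  set (R0 := if ((i =? q)%Z && (p <? q)%Z)%bool then 1 else powerRZ 2 (- Z.max i (Z.max p q) - i + p + q)).
  assert (R0pos : 0 < R0) by (unfold R0; destruct (_ && _)%bool; [lra|apply powerRZ_lt; lra]).
  apply vnorm_le. { apply Rmult_le_pos; [|auto]. apply Rmult_le_pos; [|auto]. lra. }
  intros k Hk.
  set (qn := Z.to_nat q). set (f := fun j r => v r k j). set (g := fun j r => w r j). set (Fk := fun r => F r k).
  assert (HFk : forall t, 0<=t<=1 -> exists pr : Riemann_integrable (Hs d p qn f g) 0 t, Fk t = RiemannInt pr).
  { intros t' Ht'. exact (HF t' k Ht' Hk). }
  assert (HAk : forall s, 0<=s<=1 -> fsum d (fun j => Rabs (SDelta (f j) p s)) <= A).
  { intros s Hs'. eapply Rle_trans; [|apply (HA s Hs')]. apply (opnorm_row n d (fun k j => SDelta (fun r => v r k j) p s) k Hk). }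
  assert (HBk : forall s, 0<=s<=1 -> forall j, (j<d)%nat -> Rabs (DeltaN (g j) qn s) <= B).
  { intros s Hs' j Hj. eapply Rle_trans; [|apply (HB s Hs')].
    eapply Rle_trans; [|apply (vnorm_comp d (fun j => SDelta (fun r => w r j) q s) j Hj)].
    unfold SDelta. destruct (q <? 0)%Z eqn:E; [apply Z.ltb_lt in E; lia|]. apply Rle_refl. }
  change (SDelta (fun r => F r k) i t) with (SDelta Fk i t).
  unfold SDelta. destruct (i <? 0)%Z eqn:Ei.
  { rewrite (F0 d p qn f g Fk HFk), Rabs_R0. apply Rmult_le_pos; [|auto]. apply Rmult_le_pos; [|auto]. lra. }
  apply Z.ltb_ge in Ei.
  set (ni := Z.to_nat i). set (P1 := Z.to_nat (p+1)).
  pose proof (pow2_pos ni) as Pni. pose proof (pow2_pos qn) as Pqn. pose proof (pow2_pos P1) as PP1.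
  assert (Main : exists M, 0 <= M /\ M <= 4 * R0 * A * B /\ (ni = 0%nat -> Rabs (Fk 1 - Fk 0) <= M) /\
                  (forall m, (1 <= m <= 2^ni)%nat -> Rabs (scoef Fk ni m) <= M)).
  2:{ destruct Main as (M & M1 & M2 & M3 & M4).
      eapply Rle_trans. apply (DeltaN_bound Fk ni t M M Ht M1 M1 M3 M4). lra. }
  destruct (Z_le_gt_dec i p) as [Hip|Hip]; [destruct (Z_le_gt_dec q p) as [Hqp|Hqp]|].
  -
    set (L := S (Z.to_nat p)).
    set (E := / 2^L * (A * (2^(S qn) * (2*B)))).
    assert (Cells : forall l, (l < 2^L)%nat -> Rabs (Fk (INR (l+1) / 2^L) - Fk (INR l / 2^L)) <= E).
    { intros l Hl. apply (piece_triv d p qn f g Fk A B Hp HFk HAk HBk); auto; unfold L, qn; lia. }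
    assert (ER : 2 * INR (2^(L - S ni)) * E = 4 * R0 * A * B).
    { unfold R0. replace ((i =? q)%Z && (p <? q)%Z)%bool with false by (symmetry; apply andb_false_iff; right; apply Z.ltb_ge; lia).
      replace (- Z.max i (Z.max p q) - i + p + q)%Z with (Z.of_nat qn - Z.of_nat ni)%Z by (unfold qn, ni; lia).
      rewrite pwZ, INR_pow2, pow_subR by (unfold L, ni; lia). unfold E. simpl. pose proof (pow2_pos (Z.to_nat p)). field; lra. }
    exists (2 * INR (2^(L - S ni)) * E). split; [|split; [lra|split]].
    + rewrite ER. apply Rmult_le_pos; [|auto]. apply Rmult_le_pos; [|auto]. lra.
    + intros H0. eapply Rle_trans. apply (G0_bound Fk L E Cells). rewrite H0, INR_pow2.
      replace (L - 1)%nat with (Z.to_nat p) by (unfold L; lia). rewrite INR_pow2. unfold L; simpl. lra.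
    + intros m Hm. apply (G_bound Fk L E ni m); auto. unfold L, ni; lia.
  -
    destruct (Z.eq_dec i q) as [Hiq|Hiq].
    +
      set (L := S qn).
      set (E := / 2^L * (A * (2^(S qn) * (2*B)))).
      assert (Cells : forall l, (l < 2^L)%nat -> Rabs (Fk (INR (l+1) / 2^L) - Fk (INR l / 2^L)) <= E).
      { intros l Hl. apply (piece_triv d p qn f g Fk A B Hp HFk HAk HBk); auto; unfold L, qn, P1 in *; lia. }
      assert (ER : 2 * INR (2^(L - S ni)) * E = 4 * R0 * A * B).
      { unfold R0. replace ((i =? q)%Z && (p <? q)%Z)%bool with true by (symmetry; apply andb_true_iff; split; [apply Z.eqb_eq|apply Z.ltb_lt]; lia).
        replace (L - S ni)%nat with 0%nat by (unfold L, qn, ni; lia). unfold E, L. simpl. pose proof (pow2_pos qn). field; lra. }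
      exists (2 * INR (2^(L - S ni)) * E). split; [|split; [lra|split]].
      * rewrite ER. apply Rmult_le_pos; [|auto]. apply Rmult_le_pos; [|auto]. lra.
      * intros H0. eapply Rle_trans. apply (G0_bound Fk L E Cells). rewrite !INR_pow2.
        replace (L - S ni)%nat with 0%nat by (unfold L, qn, ni; lia).
        replace L with 1%nat by (unfold L, qn, ni in *; lia). simpl. lra.
      * intros m Hm. apply (G_bound Fk L E ni m); auto. unfold L, ni, qn; lia.
    +
      set (L := qn).
      set (E := (/ 2^(S qn))^2 * ((2^P1 * (2*A)) * (2^(S qn) * (2*B)))).
      assert (Cells : forall l, (l < 2^L)%nat -> Rabs (Fk (INR (l+1) / 2^L) - Fk (INR l / 2^L)) <= E).
      { intros l Hl. apply (cell_cancel d p qn f g Fk A B Hp HFk HAk HBk A0 B0); auto; unfold L, qn, P1 in *; lia. }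
      assert (ER : 2 * INR (2^(L - S ni)) * E = 4 * R0 * A * B).
      { unfold R0. replace ((i =? q)%Z && (p <? q)%Z)%bool with false by (symmetry; apply andb_false_iff; left; apply Z.eqb_neq; lia).
        replace (- Z.max i (Z.max p q) - i + p + q)%Z with (Z.of_nat P1 - Z.of_nat (1 + ni))%Z by (unfold qn, ni, P1; lia).
        rewrite pwZ, INR_pow2, pow_subR by (unfold L, qn, ni; lia). unfold E, L. simpl. field; lra. }
      exists (2 * INR (2^(L - S ni)) * E). split; [|split; [lra|split]].
      * rewrite ER. apply Rmult_le_pos; [|auto]. apply Rmult_le_pos; [|auto]. lra.
      * intros H0. eapply Rle_trans. apply (G0_bound Fk L E Cells). rewrite !INR_pow2.
        rewrite H0. replace (L - 1)%nat with (qn - 1)%nat by auto. rewrite pow_subR by (unfold qn, ni in *; lia).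
        unfold E, L. simpl. apply Req_le. field; lra.
      * intros m Hm. apply (G_bound Fk L E ni m); auto. unfold L, ni, qn; lia.
  -
    destruct (Z_le_gt_dec q i) as [Hqi|Hqi]; [destruct (Z.eq_dec i q) as [Hiq|Hiq]|].
    +
      set (L := S qn).
      set (E := / 2^L * (A * (2^(S qn) * (2*B)))).
      assert (Cells : forall l, (l < 2^L)%nat -> Rabs (Fk (INR (l+1) / 2^L) - Fk (INR l / 2^L)) <= E).
      { intros l Hl. apply (piece_triv d p qn f g Fk A B Hp HFk HAk HBk); auto; unfold L, qn, P1 in *; lia. }
      assert (ER : 2 * INR (2^(L - S ni)) * E = 4 * R0 * A * B).
      { unfold R0. replace ((i =? q)%Z && (p <? q)%Z)%bool with true by (symmetry; apply andb_true_iff; split; [apply Z.eqb_eq|apply Z.ltb_lt]; lia).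
        replace (L - S ni)%nat with 0%nat by (unfold L, qn, ni; lia). unfold E, L. simpl. pose proof (pow2_pos qn). field; lra. }
      exists (2 * INR (2^(L - S ni)) * E). split; [|split; [lra|split]].
      * rewrite ER. apply Rmult_le_pos; [|auto]. apply Rmult_le_pos; [|auto]. lra.
      * intros H0. eapply Rle_trans. apply (G0_bound Fk L E Cells). rewrite !INR_pow2.
        replace (L - S ni)%nat with 0%nat by (unfold L, qn, ni; lia).
        replace L with 1%nat by (unfold L, qn, ni in *; lia). simpl. lra.
      * intros m Hm. apply (G_bound Fk L E ni m); auto. unfold L, ni, qn; lia.
    +
      set (M := (/ 2^(S ni))^2 * ((2^P1 * (2*A)) * (2^(S qn) * (2*B)))).
      assert (ER : M = 4 * R0 * A * B).
      { unfold R0. replace ((i =? q)%Z && (p <? q)%Z)%bool with false by (symmetry; apply andb_false_iff; left; apply Z.eqb_neq; lia).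
        replace (- Z.max i (Z.max p q) - i + p + q)%Z with (Z.of_nat (P1 + qn) - Z.of_nat (1 + ni + ni))%Z by (unfold qn, ni, P1; lia).
        rewrite pwZ, !pow_add. unfold M. simpl. field; lra. }
      exists M. split; [|split; [lra|split]].
      * rewrite ER. apply Rmult_le_pos; [|auto]. apply Rmult_le_pos; [|auto]. lra.
      * intros H0. unfold ni in H0. lia.
      * intros m Hm. apply (half_cancel d p qn f g Fk A B Hp HFk HAk HBk A0 B0); auto; unfold ni, qn, P1; lia.
    +
      set (L := qn).
      set (E := (/ 2^(S qn))^2 * ((2^P1 * (2*A)) * (2^(S qn) * (2*B)))).
      assert (Cells : forall l, (l < 2^L)%nat -> Rabs (Fk (INR (l+1) / 2^L) - Fk (INR l / 2^L)) <= E).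
      { intros l Hl. apply (cell_cancel d p qn f g Fk A B Hp HFk HAk HBk A0 B0); auto; unfold L, qn, P1 in *; lia. }
      assert (ER : 2 * INR (2^(L - S ni)) * E = 4 * R0 * A * B).
      { unfold R0. replace ((i =? q)%Z && (p <? q)%Z)%bool with false by (symmetry; apply andb_false_iff; left; apply Z.eqb_neq; lia).
        replace (- Z.max i (Z.max p q) - i + p + q)%Z with (Z.of_nat P1 - Z.of_nat (1 + ni))%Z by (unfold qn, ni, P1; lia).
        rewrite pwZ, INR_pow2, pow_subR by (unfold L, qn, ni; lia). unfold E, L. simpl. field; lra. }
      exists (2 * INR (2^(L - S ni)) * E). split; [|split; [lra|split]].
      * rewrite ER. apply Rmult_le_pos; [|auto]. apply Rmult_le_pos; [|auto]. lra.
      * intros H0. eapply Rle_trans. apply (G0_bound Fk L E Cells). rewrite !INR_pow2.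
        rewrite H0. replace (L - 1)%nat with (qn - 1)%nat by auto. rewrite pow_subR by (unfold qn, ni in *; lia).
        unfold E, L. simpl. apply Req_le. field; lra.
      * intros m Hm. apply (G_bound Fk L E ni m); auto. unfold L, ni, qn; lia.
Qed.
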